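(* Let $(X,\tau)$ be a topological space, $\delta$ a quasi-proximity compatible with $\tau$ such that $\mathcal{V}_\delta$ is transitive, $\mathcal{B}=\mathcal{B}(\mathcal{V}_\delta)$, and let $\mathcal{V}$ be a transitive quasi-uniformity on $X$. Then $\mathcal{V}\in\pi(\delta)$ if and only if $\mathcal{V}_\delta\subseteq\mathcal{V}$ and for every transitive $U\in\mathcal{V}$ and every $A\subseteq X$ we have $U(A)\in\mathcal{B}$.
   Context: Quasi-uniformities and quasi-proximities are in the sense of Fletcher–Lindgren. $\pi(\delta)$ is the set of quasi-uniformities inducing the quasi-proximity $\delta$; $\mathcal{V}_\delta$ is its coarsest (totally bounded) element. A quasi-uniformity is transitive if it has a base of transitive entourages ($U\circ U\subseteq U$). $U(A)=\bigcup_{a\in A}\{y:(a,y)\in U\}$. For $N\subseteq X$, $U_N=(N\times N)\cup((X\setminus N)\times X)$ and $\mathcal{B}(\mathcal{V}_\delta)=\{N\in\tau:U_N\in\mathcal{V}_\delta\}$, an l-base of $\tau$ (closed under finite unions and intersections, containing $\emptyset,X$). *)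

(* Defs.v *)
From Stdlib Require Import Classical.

Set Implicit Arguments.

Section Defs.
Variable X : Type.

Definition setT : X -> Prop := fun _ => True.
Definition set0 : X -> Prop := fun _ => False.
Definition setU (A B : X -> Prop) : X -> Prop := fun x => A x \/ B x.
Definition setI (A B : X -> Prop) : X -> Prop := fun x => A x /\ B x.
Definition setC (A : X -> Prop) : X -> Prop := fun x => ~ A x.
Definition set1 (a : X) : X -> Prop := fun x => x = a.

Definition is_topology (tau : (X -> Prop) -> Prop) : Prop :=
  tau setT /\ tau set0 /\
  (forall A B, tau A -> tau B -> tau (setI A B)) /\
  (forall F : (X -> Prop) -> Prop, (forall A, F A -> tau A) ->
     tau (fun x => exists A, F A /\ A x)).

Definition image (U : X -> X -> Prop) (A : X -> Prop) : X -> Prop :=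
  fun y => exists a, A a /\ U a y.

Definition transitive_rel (U : X -> X -> Prop) : Prop :=
  forall x y z, U x y -> U y z -> U x z.

Definition quasi_uniformity (Q : (X -> X -> Prop) -> Prop) : Prop :=
  Q (fun _ _ => True) /\
  (forall R S, Q R -> (forall x y, R x y -> S x y) -> Q S) /\
  (forall R S, Q R -> Q S -> Q (fun x y => R x y /\ S x y)) /\
  (forall R, Q R -> forall x, R x x) /\
  (forall R, Q R -> exists S, Q S /\
       forall x y z, S x y -> S y z -> R x z).

Definition transitive_qu (Q : (X -> X -> Prop) -> Prop) : Prop :=
  forall R, Q R -> exists S, Q S /\ transitive_rel S /\
       forall x y, S x y -> R x y.

(* Quasi-proximity in the sense of Fletcher--Lindgren. *)
Definition quasi_proximity (d : (X -> Prop) -> (X -> Prop) -> Prop) : Prop :=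
  (forall A B C, d (setU A B) C <-> (d A C \/ d B C)) /\
  (forall A B C, d A (setU B C) <-> (d A B \/ d A C)) /\
  (forall A B, d A B -> (exists x, A x) /\ (exists y, B y)) /\
  (forall A B, (exists x, A x /\ B x) -> d A B) /\
  (forall A B, ~ d A B -> exists C, ~ d A C /\ ~ d (setC C) B).

Definition qp_open (d : (X -> Prop) -> (X -> Prop) -> Prop) (G : X -> Prop) : Prop :=
  forall x, G x -> ~ d (set1 x) (setC G).

Definition compatible (d : (X -> Prop) -> (X -> Prop) -> Prop)
  (tau : (X -> Prop) -> Prop) : Prop :=
  forall G, tau G <-> qp_open d G.

Definition qu_proximity (Q : (X -> X -> Prop) -> Prop) (A B : X -> Prop) : Prop :=
  forall R, Q R -> exists x y, A x /\ B y /\ R x y.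

Definition in_pi (d : (X -> Prop) -> (X -> Prop) -> Prop)
  (Q : (X -> X -> Prop) -> Prop) : Prop :=
  quasi_uniformity Q /\ (forall A B, qu_proximity Q A B <-> d A B).

Definition coarsest_in_pi (d : (X -> Prop) -> (X -> Prop) -> Prop)
  (Vd : (X -> X -> Prop) -> Prop) : Prop :=
  in_pi d Vd /\ (forall W, in_pi d W -> forall R, Vd R -> W R).

Definition U_N (N : X -> Prop) : X -> X -> Prop :=
  fun x y => (N x /\ N y) \/ ~ N x.

Definition in_B (tau : (X -> Prop) -> Prop) (Vd : (X -> X -> Prop) -> Prop)
  (N : X -> Prop) : Prop :=
  tau N /\ Vd (U_N N).

End Defs.

(* Main.v *)
Require Import Defs.
From Stdlib Require Import Classical.

Theorem corollary2p5 (X : Type) (tau : (X -> Prop) -> Prop)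
  (d : (X -> Prop) -> (X -> Prop) -> Prop)
  (Vd V : (X -> X -> Prop) -> Prop) :
  is_topology tau ->
  quasi_proximity d ->
  compatible d tau ->
  coarsest_in_pi d Vd ->
  transitive_qu Vd ->
  quasi_uniformity V ->
  transitive_qu V ->
  (in_pi d V <->
   ((forall R, Vd R -> V R) /\
    (forall U, V U -> transitive_rel U ->
       forall A : X -> Prop, in_B tau Vd (image U A)))).
Proof.
  intros _ _ Hcomp [[HVdq HVdp] Hcoar] _ HVq HVt.
  pose proof HVq as HVq0.
  destruct HVdq as [_ [HVdup _]].
  destruct HVq as [_ [HVup [_ [HVrefl _]]]].
  split.
  - intros Hpi. split.
    + intros R HR. apply (Hcoar V Hpi R HR).
    + intros U HU HUt A. destruct Hpi as [_ HVp].
      set (N := image U A).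
      assert (HnN : ~ d N (setC N)).
      { intro Hd. apply HVp in Hd. destruct (Hd U HU) as [x [y [Nx [Ny Uxy]]]].
        apply Ny. destruct Nx as [a [Aa Uax]]. exists a. split; auto.
        exact (HUt _ _ _ Uax Uxy). }
      split.
      * apply Hcomp. intros x Nx Hd. apply HVp in Hd.
        destruct (Hd U HU) as [x' [y [Hx' [Ny Uxy]]]].
        unfold set1 in Hx'. subst x'.
        apply Ny. destruct Nx as [a [Aa Uax]]. exists a. split; auto.
        exact (HUt _ _ _ Uax Uxy).
      * assert (Hq : ~ qu_proximity Vd N (setC N)).
        { intro H. apply HnN. apply HVdp. exact H. }
        unfold qu_proximity in Hq.
        apply not_all_ex_not in Hq. destruct Hq as [R HR].
        apply imply_to_and in HR. destruct HR as [HR Hno].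
        apply (HVdup R). exact HR.
        intros x y Rxy. unfold U_N.
        destruct (classic (N x)) as [Nx|Nx]; [|right; exact Nx].
        left. split; [exact Nx|].
        apply NNPP. intro Ny. apply Hno. exists x, y. auto.
  - intros [Hsub HB]. split; [exact HVq0|].
    intros A B. split.
    + intros Hq. apply NNPP. intro Hd.
      assert (Hq2 : ~ qu_proximity Vd A B).
      { intro H. apply Hd. apply HVdp. exact H. }
      apply Hq2. intros R HR. apply (Hq R (Hsub R HR)).
    + intros Hd R HR. apply NNPP. intro Hno.
      destruct (HVt R HR) as [S [HS [HSt HSR]]].
      set (N := image S A).
      destruct (HB S HS HSt A) as [_ HUN].
      apply HVdp in Hd. destruct (Hd _ HUN) as [x [y [Ax [By Hxy]]]].
      assert (Nx : N x) by (exists x; split; [exact Ax| apply (HVrefl S HS)]).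
      destruct Hxy as [[_ Ny]|Hn]; [|contradiction].
      destruct Ny as [a [Aa Say]].
      apply Hno. exists a, y. split; [exact Aa|split;[exact By| apply HSR; exact Say]].
Qed.
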